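(* For all terms $P,Q$ of $\mathcal{L}$: if $P\equiv Q$ or $P\sim_{\mathrm{HOIO}}Q$, then $d(P)=d(Q)$.
   Context: Calculus $\mathcal{L}$: names are constants ($a,b,c,d$) or name variables ($x,y,z$), $m,n$ range over names; process variables $X,Y,Z$. Terms: $P,Q::=0\mid X\mid m(X).P\mid \overline{m}(Q)\mid P|Q\mid \langle X\rangle P\mid P\langle Q\rangle\mid\langle x\rangle P\mid P\langle n\rangle$, with the usual binders, identified up to $\alpha$-conversion, well-typed and with terminating applications. Structural congruence $\equiv$: smallest congruence with associativity and commutativity of $|$, $P|0\equiv P$, $(\langle X\rangle P)\langle Q\rangle\equiv P\{Q/X\}$, $(\langle x\rangle P)\langle m\rangle\equiv P\{m/x\}$. Transitions: $m(X).P\xrightarrow{m(X)}P$; $\overline{m}Q\xrightarrow{\overline{m}Q}0$; $P\xrightarrow{\lambda}P'$ implies $P|Q\xrightarrow{\lambda}P'|Q$; $P\xrightarrow{\overline{m}A}P'$, $Q\xrightarrow{m(X)}Q'$ imply $P|Q\xrightarrow{\tau}P'|Q'\{A/X\}$; symmetric versions; closure under $\equiv$. Depth $d$: $d(0)=0$, $d(X)=1$, $d(m(X).P)=d(P)+1$, $d(\overline{m}(P))=d(P)+1$, $d(P_1|P_2)=d(P_1)+d(P_2)$, $d(\langle X\rangle P)=d(P)+1$, $d(X\langle P\rangle)=d(P)+1$, $d((\langle Y\rangle P_3)\langle P_2\rangle)=d(P_3\{P_2/Y\})$, $d(\langle x\rangle P)=d(P)+1$, $d(X\langle n\rangle)=1$,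 $d((\langle y\rangle P_3)\langle n\rangle)=d(P_3\{n/y\})$. Strong HO-IO bisimulation: symmetric $R$ on terms such that $P\,R\,Q$ implies: (1) if $P$ is a non-abstraction (not of form $\langle Y\rangle A$ or $\langle y\rangle A$) so is $Q$; (2) if $P=\langle Y\rangle A$ then $Q=\langle Y\rangle B$, $A\,R\,B$; (3) if $P=\langle y\rangle A$ then $Q=\langle y\rangle B$, $A\,R\,B$; (4) if $P\xrightarrow{\overline{a}A}P'$ then $Q\xrightarrow{\overline{a}B}Q'$, $A\,R\,B$, $P'\,R\,Q'$; (5) if $P\xrightarrow{a(X)}P'$ then $Q\xrightarrow{a(X)}Q'$, $P'\,R\,Q'$; (6) if $P\equiv X|P'$ then $Q\equiv X|Q'$, $P'\,R\,Q'$; (7) if $P\equiv X\langle A\rangle|P'$ then $Q\equiv X\langle B\rangle|Q'$, $A\,R\,B$, $P'\,R\,Q'$; (8) if $P\equiv X\langle d\rangle|P'$ then $Q\equiv X\langle d\rangle|Q'$, $P'\,R\,Q'$. $\sim_{\mathrm{HOIO}}$ is the largest such relation. *)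

(* Defs.v *)
(* The higher-order calculus L with process/name abstractions,
   represented with de Bruijn indices (two independent index spaces:
   process variables X,Y,Z and name variables x,y,z), so that terms are
   automatically identified up to alpha-conversion. *)
From Stdlib Require Import List Arith.
Import ListNotations.

(* names: constants a,b,c,d (NC) or name variables x,y,z (NV, de Bruijn) *)
Inductive name : Type :=
| NC (c : nat)
| NV (i : nat).

(* terms  P,Q ::= 0 | X | m(X).P | m̄(Q) | P|Q | <X>P | P<Q> | <x>P | P<n> *)
Inductive term : Type :=
| Nil : term
| PVar (i : nat) : term
| Inp (m : name) (P : term) : term (* m(X).P   binds process var 0 in P *)
| Out (m : name) (Q : term) : term
| Par (P Q : term) : term
| PAbs (P : term) : term           (* <X>P     binds process var 0 in P *)
| PApp (P Q : term) : term
| NAbs (P : term) : term           (* <x>P     binds name var 0 in P *)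
| NApp (P : term) (n : name) : term.

Fixpoint shiftP (c : nat) (P : term) : term :=
  match P with
  | Nil => Nil
  | PVar i => if c <=? i then PVar (Datatypes.S i) else PVar i
  | Inp m P => Inp m (shiftP (Datatypes.S c) P)
  | Out m Q => Out m (shiftP c Q)
  | Par P Q => Par (shiftP c P) (shiftP c Q)
  | PAbs P => PAbs (shiftP (Datatypes.S c) P)
  | PApp P Q => PApp (shiftP c P) (shiftP c Q)
  | NAbs P => NAbs (shiftP c P)
  | NApp P n => NApp (shiftP c P) n
  end.

Definition shiftNname (c : nat) (n : name) : name :=
  match n with
  | NC a => NC a
  | NV i => if c <=? i then NV (Datatypes.S i) else NV i
  end.

Fixpoint shiftN (c : nat) (P : term) : term :=
  match P with
  | Nil => Nil
  | PVar i => PVar i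
  | Inp m P => Inp (shiftNname c m) (shiftN c P)
  | Out m Q => Out (shiftNname c m) (shiftN c Q)
  | Par P Q => Par (shiftN c P) (shiftN c Q)
  | PAbs P => PAbs (shiftN c P)
  | PApp P Q => PApp (shiftN c P) (shiftN c Q)
  | NAbs P => NAbs (shiftN (Datatypes.S c) P)
  | NApp P n => NApp (shiftN c P) (shiftNname c n)
  end.

(* substP k Q P = P{Q/X_k}; Q lives in the context outside the binder of X_k *)
Fixpoint substP (k : nat) (Q : term) (P : term) : term :=
  match P with
  | Nil => Nil
  | PVar i => if i =? k then Q else if k <? i then PVar (pred i) else PVar i
  | Inp m P => Inp m (substP (Datatypes.S k) (shiftP 0 Q) P)
  | Out m R => Out m (substP k Q R)
  | Par P1 P2 => Par (substP k Q P1) (substP k Q P2)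
  | PAbs P => PAbs (substP (Datatypes.S k) (shiftP 0 Q) P)
  | PApp P1 P2 => PApp (substP k Q P1) (substP k Q P2)
  | NAbs P => NAbs (substP k (shiftN 0 Q) P)
  | NApp P n => NApp (substP k Q P) n
  end.

Definition substNname (k : nat) (n : name) (m : name) : name :=
  match m with
  | NC a => NC a
  | NV i => if i =? k then n else if k <? i then NV (pred i) else NV i
  end.

Fixpoint substN (k : nat) (n : name) (P : term) : term :=
  match P with
  | Nil => Nil
  | PVar i => PVar i
  | Inp m P => Inp (substNname k n m) (substN k n P)
  | Out m Q => Out (substNname k n m) (substN k n Q)
  | Par P1 P2 => Par (substN k n P1) (substN k n P2)
  | PAbs P => PAbs (substN k n P)
  | PApp P1 P2 => PApp (substN k n P1) (substN k n P2)
  | NAbs P => NAbs (substN (Datatypes.S k) (shiftNname 0 n) P)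
  | NApp P m => NApp (substN k n P) (substNname k n m)
  end.

(* TPr: processes; TAbs T: process abstractions <X>P with X : T;
   TNAbs T: name abstractions <x>P with x a channel carrying values of type T.
   A name has a "sort": the type of the values it carries. *)
Inductive ty : Type :=
| TPr
| TAbs (T : ty)
| TNAbs (T : ty).

Definition name_ty (srt : nat -> ty) (GN : list ty) (n : name) : option ty :=
  match n with
  | NC a => Some (srt a)
  | NV i => nth_error GN i
  end.

Inductive typed (srt : nat -> ty) : list ty -> list ty -> term -> ty -> Prop :=
| ty_nil GN GP : typed srt GN GP Nil TPr
| ty_var GN GP i T : nth_error GP i = Some T -> typed srt GN GP (PVar i) T
| ty_inp GN GP m T P :
    name_ty srt GN m = Some T -> typed srt GN (T :: GP) P TPr ->
    typed srt GN GP (Inp m P) TPr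
| ty_out GN GP m T Q :
    name_ty srt GN m = Some T -> typed srt GN GP Q T ->
    typed srt GN GP (Out m Q) TPr
| ty_par GN GP P Q :
    typed srt GN GP P TPr -> typed srt GN GP Q TPr ->
    typed srt GN GP (Par P Q) TPr
| ty_pabs GN GP T P :
    typed srt GN (T :: GP) P TPr -> typed srt GN GP (PAbs P) (TAbs T)
| ty_papp GN GP T P Q :
    typed srt GN GP P (TAbs T) -> typed srt GN GP Q T ->
    typed srt GN GP (PApp P Q) TPr
| ty_nabs GN GP T P :
    typed srt (T :: GN) GP P TPr -> typed srt GN GP (NAbs P) (TNAbs T)
| ty_napp GN GP T P n :
    typed srt GN GP P (TNAbs T) -> name_ty srt GN n = Some T ->
    typed srt GN GP (NApp P n) TPr.

(* P is a term of L *)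
Definition well_typed (P : term) : Prop :=
  exists srt GN GP T, typed srt GN GP P T.

Inductive cong : term -> term -> Prop :=
| cg_refl P : cong P P
| cg_sym P Q : cong P Q -> cong Q P
| cg_trans P Q R : cong P Q -> cong Q R -> cong P R
| cg_par_comm P Q : cong (Par P Q) (Par Q P)
| cg_par_assoc P Q R : cong (Par (Par P Q) R) (Par P (Par Q R))
| cg_par_nil P : cong (Par P Nil) P
| cg_beta_P P Q : cong (PApp (PAbs P) Q) (substP 0 Q P)
| cg_beta_N P n : cong (NApp (NAbs P) n) (substN 0 n P)
| cg_inp m P P' : cong P P' -> cong (Inp m P) (Inp m P')
| cg_out m Q Q' : cong Q Q' -> cong (Out m Q) (Out m Q')
| cg_par P P' Q Q' : cong P P' -> cong Q Q' -> cong (Par P Q) (Par P' Q')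
| cg_pabs P P' : cong P P' -> cong (PAbs P) (PAbs P')
| cg_papp P P' Q Q' : cong P P' -> cong Q Q' -> cong (PApp P Q) (PApp P' Q')
| cg_nabs P P' : cong P P' -> cong (NAbs P) (NAbs P')
| cg_napp P P' n : cong P P' -> cong (NApp P n) (NApp P' n).

(* LIn m stands for m(X); the target of an input transition has the received
   variable X free as process index 0. *)
Inductive label : Type :=
| LOut (m : name) (A : term)
| LIn (m : name)
| LTau.

Inductive lts : term -> label -> term -> Prop :=
| lt_inp m P : lts (Inp m P) (LIn m) P
| lt_out m Q : lts (Out m Q) (LOut m Q) Nil
| lt_par_l_out P P' Q m A : lts P (LOut m A) P' -> lts (Par P Q) (LOut m A) (Par P' Q)
| lt_par_l_tau P P' Q : lts P LTau P' -> lts (Par P Q) LTau (Par P' Q)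
| lt_par_l_in P P' Q m : lts P (LIn m) P' -> lts (Par P Q) (LIn m) (Par P' (shiftP 0 Q))
| lt_par_r_out P Q Q' m A : lts Q (LOut m A) Q' -> lts (Par P Q) (LOut m A) (Par P Q')
| lt_par_r_tau P Q Q' : lts Q LTau Q' -> lts (Par P Q) LTau (Par P Q')
| lt_par_r_in P Q Q' m : lts Q (LIn m) Q' -> lts (Par P Q) (LIn m) (Par (shiftP 0 P) Q')
| lt_comm_l P P' Q Q' m A :
    lts P (LOut m A) P' -> lts Q (LIn m) Q' -> lts (Par P Q) LTau (Par P' (substP 0 A Q'))
| lt_comm_r P P' Q Q' m A :
    lts P (LIn m) P' -> lts Q (LOut m A) Q' -> lts (Par P Q) LTau (Par (substP 0 A P') Q')
| lt_struct P P1 P1' P' l :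
    cong P P1 -> lts P1 l P1' -> cong P1' P' -> lts P l P'.

Definition is_abstraction (P : term) : Prop :=
  (exists A, P = PAbs A) \/ (exists A, P = NAbs A).

Definition is_hoio_bisim (R : term -> term -> Prop) : Prop :=
  (forall P Q, R P Q -> R Q P) /\
  forall P Q, R P Q ->
    (* (1) *) (~ is_abstraction P -> ~ is_abstraction Q) /\
    (* (2) *) (forall A, P = PAbs A -> exists B, Q = PAbs B /\ R A B) /\
    (* (3) *) (forall A, P = NAbs A -> exists B, Q = NAbs B /\ R A B) /\
    (* (4) *) (forall m A P', lts P (LOut m A) P' ->
                 exists B Q', lts Q (LOut m B) Q' /\ R A B /\ R P' Q') /\
    (* (5) *) (forall m P', lts P (LIn m) P' ->
                 exists Q', lts Q (LIn m) Q' /\ R P' Q') /\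
    (* (6) *) (forall i P', cong P (Par (PVar i) P') ->
                 exists Q', cong Q (Par (PVar i) Q') /\ R P' Q') /\
    (* (7) *) (forall i A P', cong P (Par (PApp (PVar i) A) P') ->
                 exists B Q', cong Q (Par (PApp (PVar i) B) Q') /\ R A B /\ R P' Q') /\
    (* (8) *) (forall i n P', cong P (Par (NApp (PVar i) n) P') ->
                 exists Q', cong Q (Par (NApp (PVar i) n) Q') /\ R P' Q').

Definition hoio_bisimilar (P Q : term) : Prop :=
  exists R, is_hoio_bisim R /\ R P Q.

(* ---------- depth d, as the (partial) function given by its clauses ---------- *)
Inductive depth : term -> nat -> Prop :=
| d_nil : depth Nil 0
| d_var i : depth (PVar i) 1
| d_inp m P k : depth P k -> depth (Inp m P) (Datatypes.S k)
| d_out m P k : depth P k -> depth (Out m P) (Datatypes.S k)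
| d_par P1 P2 k1 k2 : depth P1 k1 -> depth P2 k2 -> depth (Par P1 P2) (k1 + k2)
| d_pabs P k : depth P k -> depth (PAbs P) (Datatypes.S k)
| d_varapp i P k : depth P k -> depth (PApp (PVar i) P) (Datatypes.S k)
| d_beta_P P3 P2 k : depth (substP 0 P2 P3) k -> depth (PApp (PAbs P3) P2) k
| d_nabs P k : depth P k -> depth (NAbs P) (Datatypes.S k)
| d_varnapp i n : depth (NApp (PVar i) n) 1
| d_beta_N P3 n k : depth (substN 0 n P3) k -> depth (NApp (NAbs P3) n) k.

(* Main.v *)
Require Import Defs.
From Stdlib Require Import List Arith Lia FunctionalExtensionality PropExtensionality Setoid Morphisms.
Import ListNotations.

Inductive tok : Type :=
| TNum (n : nat)
| TFun (e : list tok) (m : tok)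
| TNm (m : tok).

Definition val := tok -> Prop.
Definition env := nat -> val.

Definition scons (v : val) (r : env) : env :=
  fun i => match i with 0 => v | S j => r j end.

Definition Var : val := fun t =>
  t = TNum 1 \/ (exists k, t = TFun [TNum k] (TNum (S k))) \/ t = TNm (TNum 1).

Definition notnum (t : tok) : Prop := match t with TNum _ => False | _ => True end.

Definition setof (e : list tok) : val := fun x => In x e.

Fixpoint sem (P : term) (r : env) (t : tok) {struct P} : Prop :=
  match P with
  | Nil => t = TNum 0
  | PVar i => r i t
  | Inp _ P => exists k, t = TNum (S k) /\ sem P (scons Var r) (TNum k)
  | Out _ P => exists k, t = TNum (S k) /\ sem P r (TNum k)
  | Par P Q => (exists a b, t = TNum (a + b) /\ sem P r (TNum a) /\ sem Q r (TNum b))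
               \/ (notnum t /\ (sem P r t \/ sem Q r t))
  | PAbs P => (exists k, t = TNum (S k) /\ sem P (scons Var r) (TNum k))
              \/ (exists e m, t = TFun e m /\ sem P (scons (setof e) r) m)
  | PApp P Q => exists e, sem P r (TFun e t) /\ Forall (sem Q r) e
  | NAbs P => (exists k, t = TNum (S k) /\ sem P r (TNum k))
              \/ (exists m, t = TNm m /\ sem P r m)
  | NApp P _ => sem P r (TNm t)
  end.

Definition lift (c : nat) (r : env) : env := fun i => r (if c <=? i then S i else i).
Definition ins (k : nat) (v : val) (r : env) : env :=
  fun i => if i =? k then v else if k <? i then r (pred i) else r i.

Lemma lift_scons c v r : lift (S c) (scons v r) = scons v (lift c r).
Proof. apply functional_extensionality; intros [|i]; unfold lift; simpl; auto. destruct (c <=? i); auto. Qed.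

Lemma lift0_scons v r : lift 0 (scons v r) = r.
Proof. apply functional_extensionality; intros i; reflexivity. Qed.

Lemma ins_scons k w v r : ins (S k) w (scons v r) = scons v (ins k w r).
Proof.
  apply functional_extensionality; intros [|i]; unfold ins; simpl; try reflexivity.
  destruct (i =? k) eqn:E; auto.
  destruct i; simpl.
  - destruct k; reflexivity.
  - change (S k <? S (S i)) with (k <? S i). destruct (k <? S i); auto.
Qed.

Lemma sem_papp_iff P1 P2 P1' P2' r r' t :
  (forall t, sem P1 r t <-> sem P1' r' t) -> (forall t, sem P2 r t <-> sem P2' r' t) ->
  (sem (PApp P1 P2) r t <-> sem (PApp P1' P2') r' t).
Proof.
  intros H1 H2; simpl; split; intros [e [A B]]; exists e; split;
    try (apply H1; auto); eapply Forall_impl; try eassumption; intros; apply H2; auto.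
Qed.

Lemma sem_lift_scons P c v r t : sem P (lift (S c) (scons v r)) t <-> sem P (scons v (lift c r)) t.
Proof. rewrite lift_scons; reflexivity. Qed.

Lemma sem_shiftP P : forall c r t, sem (shiftP c P) r t <-> sem P (lift c r) t.
Proof.
  induction P; intros c r t; cbn [shiftP]; try (apply sem_papp_iff; intros; auto; fail); simpl.
  - reflexivity.
  - unfold lift. destruct (c <=? i); reflexivity.
  - setoid_rewrite IHP. setoid_rewrite sem_lift_scons. reflexivity.
  - setoid_rewrite IHP. reflexivity.
  - setoid_rewrite IHP1. setoid_rewrite IHP2. reflexivity.
  - setoid_rewrite IHP. setoid_rewrite sem_lift_scons. reflexivity.
  - setoid_rewrite IHP. reflexivity.
  - setoid_rewrite IHP. reflexivity.
Qed.

Lemma sem_shiftN P : forall c r t, sem (shiftN c P) r t <-> sem P r t.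
Proof.
  induction P; intros c r t; cbn [shiftN]; try (apply sem_papp_iff; intros; auto; fail); simpl; try reflexivity.
  - setoid_rewrite IHP. reflexivity.
  - setoid_rewrite IHP. reflexivity.
  - setoid_rewrite IHP1. setoid_rewrite IHP2. reflexivity.
  - setoid_rewrite IHP. reflexivity.
  - setoid_rewrite IHP. reflexivity.
  - setoid_rewrite IHP. reflexivity.
Qed.

Lemma sem_substN P : forall k n r t, sem (substN k n P) r t <-> sem P r t.
Proof.
  induction P; intros k nn r t; cbn [substN]; try (apply sem_papp_iff; intros; auto; fail); simpl; try reflexivity.
  - setoid_rewrite IHP. reflexivity.
  - setoid_rewrite IHP. reflexivity.
  - setoid_rewrite IHP1. setoid_rewrite IHP2. reflexivity.
  - setoid_rewrite IHP. reflexivity.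
  - setoid_rewrite IHP. reflexivity.
  - setoid_rewrite IHP. reflexivity.
Qed.

Lemma val_ext (u v : val) : (forall t, u t <-> v t) -> u = v.
Proof. intros H; apply functional_extensionality; intros t; apply propositional_extensionality; auto. Qed.

Lemma sem_shiftP0_fun Q v r : sem (shiftP 0 Q) (scons v r) = sem Q r.
Proof. apply val_ext; intros t. rewrite sem_shiftP, lift0_scons. reflexivity. Qed.

Lemma sem_shiftN_fun Q c r : sem (shiftN c Q) r = sem Q r.
Proof. apply val_ext; intros t. apply sem_shiftN. Qed.

Lemma sem_ins_scons P k w v r t : sem P (ins (S k) w (scons v r)) t <-> sem P (scons v (ins k w r)) t.
Proof. rewrite ins_scons; reflexivity. Qed.

Lemma sem_substP P : forall k Q r t, sem (substP k Q P) r t <-> sem P (ins k (sem Q r) r) t.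
Proof.
  induction P; intros k Q r t; cbn [substP]; try (apply sem_papp_iff; intros; auto; fail); simpl.
  - reflexivity.
  - unfold ins. destruct (i =? k); [reflexivity|]. destruct (k <? i); reflexivity.
  - setoid_rewrite IHP. rewrite sem_shiftP0_fun. setoid_rewrite sem_ins_scons. reflexivity.
  - setoid_rewrite IHP. reflexivity.
  - setoid_rewrite IHP1. setoid_rewrite IHP2. reflexivity.
  - setoid_rewrite IHP. setoid_rewrite sem_shiftP0_fun. setoid_rewrite sem_ins_scons. reflexivity.
  - setoid_rewrite IHP. rewrite sem_shiftN_fun. reflexivity.
  - setoid_rewrite IHP. reflexivity.
Qed.

Definition le_env (r r' : env) := forall i x, r i x -> r' i x.

Lemma le_env_scons v r r' : le_env r r' -> le_env (scons v r) (scons v r').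
Proof. intros H [|i] x; simpl; auto. Qed.

Lemma sem_mono P : forall r r' t, le_env r r' -> sem P r t -> sem P r' t.
Proof.
  induction P; intros r r' t Hle; simpl.
  - auto.
  - apply Hle.
  - intros [k [-> H]]; exists k; split; auto. eapply IHP; [|eauto]. apply le_env_scons; auto.
  - intros [k [-> H]]; exists k; split; eauto.
  - intros [(a & b & -> & H1 & H2)|[Hn [H|H]]]; [left; exists a, b; eauto | right; eauto | right; eauto].
  - intros [[k [-> H]]|(e & m & -> & H)]; [left; exists k|right; exists e, m]; split; auto;
      eapply IHP; eauto; apply le_env_scons; auto.
  - intros [e [H1 H2]]; exists e; split; eauto. eapply Forall_impl; [|eauto]. intros; eauto.
  - intros [[k [-> H]]|(m & -> & H)]; [left; exists k|right; exists m]; split; eauto.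
  - eauto.
Qed.

Definition upd (r : env) (k : nat) (v : val) : env := fun i => if i =? k then v else r i.

Lemma upd_scons w r k v : upd (scons w r) (S k) v = scons w (upd r k v).
Proof. apply functional_extensionality; intros [|i]; reflexivity. Qed.

Lemma upd_le r k e : Forall (r k) e -> le_env (upd r k (setof e)) r.
Proof.
  intros H i x; unfold upd. destruct (Nat.eqb_spec i k).
  - subst. intros Hx. rewrite Forall_forall in H. apply H, Hx.
  - auto.
Qed.

Lemma upd_incl r k e e' : incl e e' -> le_env (upd r k (setof e)) (upd r k (setof e')).
Proof. intros H i x; unfold upd. destruct (i =? k); auto. unfold setof; auto. Qed.

Lemma sem_cont P : forall r t k, sem P r t -> exists e, Forall (r k) e /\ sem P (upd r k (setof e)) t.
Proof.
  induction P; intros r t k; simpl.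
  - intros ->. exists []; auto.
  - intros H. destruct (Nat.eqb_spec i k).
    + subst. exists [t]. split; auto. unfold upd. rewrite Nat.eqb_refl. left; auto.
    + exists []. split; auto. unfold upd. apply Nat.eqb_neq in n. rewrite n. auto.
  - intros [k0 [-> H]]. destruct (IHP _ _ (S k) H) as [e [He H']].
    exists e; split; auto. exists k0; split; auto. rewrite upd_scons in H'. auto.
  - intros [k0 [-> H]]. destruct (IHP _ _ k H) as [e [He H']].
    exists e; split; auto. exists k0; split; auto.
  - intros [(a & b & -> & H1 & H2)|[Hn [H|H]]].
    + destruct (IHP1 _ _ k H1) as [e1 [He1 H1']]. destruct (IHP2 _ _ k H2) as [e2 [He2 H2']].
      exists (e1 ++ e2). split. apply Forall_app; auto.
      left. exists a, b. split; auto. split.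
      * eapply sem_mono; [|eauto]. apply upd_incl. intros x; rewrite in_app_iff; auto.
      * eapply sem_mono; [|eauto]. apply upd_incl. intros x; rewrite in_app_iff; auto.
    + destruct (IHP1 _ _ k H) as [e1 [He1 H1']]. exists e1; split; auto.
    + destruct (IHP2 _ _ k H) as [e1 [He1 H1']]. exists e1; split; auto.
  - intros [[k0 [-> H]]|(e0 & m & -> & H)].
    + destruct (IHP _ _ (S k) H) as [e [He H']].
      exists e; split; auto. left. exists k0; split; auto. rewrite upd_scons in H'. auto.
    + destruct (IHP _ _ (S k) H) as [e [He H']].
      exists e; split; auto. right. exists e0, m; split; auto. rewrite upd_scons in H'. auto.
  - intros [e0 [H1 H2]].
    destruct (IHP1 _ _ k H1) as [e1 [He1 H1']].
    assert (exists e2, Forall (r k) e2 /\ Forall (sem P2 (upd r k (setof e2))) e0) as [e2 [He2 H2']].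
    { clear H1 H1'. induction H2.
      - exists []; auto.
      - destruct IHForall as [e2 [He2 Hl]]. destruct (IHP2 _ _ k H) as [e3 [He3 H3]].
        exists (e3 ++ e2). split. apply Forall_app; auto.
        constructor.
        + eapply sem_mono; [|eauto]. apply upd_incl. intros y; rewrite in_app_iff; auto.
        + eapply Forall_impl; [|eauto]. intros a Ha. eapply sem_mono; [|eauto]. apply upd_incl. intros y; rewrite in_app_iff; auto. }
    exists (e1 ++ e2). split. apply Forall_app; auto.
    exists e0. split.
    + eapply sem_mono; [|eauto]. apply upd_incl. intros y; rewrite in_app_iff; auto.
    + eapply Forall_impl; [|eauto]. intros a Ha. eapply sem_mono; [|eauto]. apply upd_incl. intros y; rewrite in_app_iff; auto.
  - intros [[k0 [-> H]]|(m & -> & H)].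
    + destruct (IHP _ _ k H) as [e [He H']]. exists e; split; auto. left; exists k0; auto.
    + destruct (IHP _ _ k H) as [e [He H']]. exists e; split; auto. right; exists m; auto.
  - intros H. apply IHP; auto.
Qed.

Lemma upd_scons0 v r e : upd (scons v r) 0 (setof e) = scons (setof e) r.
Proof. apply functional_extensionality; intros [|i]; reflexivity. Qed.

Lemma sem_beta P Q r t : sem (PApp (PAbs P) Q) r t <-> sem P (scons (sem Q r) r) t.
Proof.
  simpl. split.
  - intros [e [[[k [Hk _]]|(e' & m & Heq & H)] H2]]; [discriminate|].
    injection Heq; intros; subst. eapply sem_mono; [|eauto].
    intros [|i] x; simpl; auto. unfold setof. intros Hx. rewrite Forall_forall in H2. auto.
  - intros H. destruct (sem_cont _ _ _ 0 H) as [e [He H']].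
    exists e. split; auto. right. exists e, t. split; auto. rewrite upd_scons0 in H'. auto.
Qed.

Lemma ins0 v r : ins 0 v r = scons v r.
Proof. apply functional_extensionality; intros [|i]; unfold ins; simpl; auto. Qed.

Lemma sem_cong P Q : cong P Q -> forall r t, sem P r t <-> sem Q r t.
Proof.
  induction 1; intros r t.
  - reflexivity.
  - symmetry; auto.
  - rewrite IHcong1; auto.
  - simpl. split; (intros [(a & b & -> & H1 & H2)|[Hn [H|H]]]; [left; exists b, a; rewrite Nat.add_comm; auto | right; auto | right; auto]).
  - simpl. split.
    + intros [(a & c & -> & [(a1 & b1 & Ha & H1 & H2)|[Hn _]] & H3)|[Hn [[(a1 & b1 & -> & _)|[_ [H|H]]]|H]]].
      * injection Ha; intros; subst. left. exists a1, (b1 + c). rewrite Nat.add_assoc. repeat split; auto.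
        left. exists b1, c. auto.
      * contradiction.
      * contradiction.
      * right; auto.
      * right; split; auto; right; right; auto.
      * right; split; auto.
    + intros [(a & c & -> & H1 & [(a1 & b1 & Ha & H2 & H3)|[Hn _]])|[Hn [H|[(a1 & b1 & -> & _)|[_ [H|H]]]]]].
      * injection Ha; intros; subst. left. exists (a + a1), b1. rewrite Nat.add_assoc. repeat split; auto.
        left. exists a, a1. auto.
      * contradiction.
      * right; split; auto.
      * contradiction.
      * right; split; auto.
      * right; auto.
  - simpl. split.
    + intros [(a & b & -> & H1 & Hb)|[Hn [H|Hz]]].
      * injection Hb; intros; subst. rewrite Nat.add_0_r; auto.
      * auto.
      * subst; contradiction.
    + intros H. destruct t as [n| |].
      * left. exists n, 0. rewrite Nat.add_0_r. auto.
      * right. simpl; auto.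
      * right. simpl; auto.
  - rewrite sem_beta, sem_substP, ins0. reflexivity.
  - rewrite sem_substN. simpl. split.
    + intros [[k [Hk _]]|(m & Hm & H)]; [discriminate|]. injection Hm; intros; subst; auto.
    + intros H. right. exists t; auto.
  - simpl. setoid_rewrite IHcong. reflexivity.
  - simpl. setoid_rewrite IHcong. reflexivity.
  - simpl. setoid_rewrite IHcong1. setoid_rewrite IHcong2. reflexivity.
  - simpl. setoid_rewrite IHcong. reflexivity.
  - apply sem_papp_iff; auto.
  - simpl. setoid_rewrite IHcong. reflexivity.
  - simpl. auto.
Qed.

Definition Vars : env := fun _ => Var.
Lemma scons_Vars : scons Var Vars = Vars.
Proof. apply functional_extensionality; intros [|i]; reflexivity. Qed.

Definition N (P : term) (j : nat) : Prop := sem P Vars (TNum j).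

Lemma depth_N P k : depth P k -> forall j, N P j <-> j = k.
Proof.
  unfold N. induction 1 as [| | | | | | | | | |]; intros j; simpl.
  - split; intros H; [injection H|subst]; auto.
  - unfold Var. split.
    + intros [H|[[k H]|H]]; try discriminate. injection H; auto.
    + intros ->; left; auto.
  - rewrite scons_Vars. split.
    + intros [k' [Hj H1]]. injection Hj; intros; subst. apply IHdepth in H1. subst; auto.
    + intros ->. exists k; split; auto. apply IHdepth; auto.
  - split.
    + intros [k' [Hj H1]]. injection Hj; intros; subst. apply IHdepth in H1. subst; auto.
    + intros ->. exists k; split; auto. apply IHdepth; auto.
  - split.
    + intros [(a & b & Hj & H1 & H2)|[Hn _]]; [|contradiction].
      injection Hj; intros; subst. apply IHdepth1 in H1. apply IHdepth2 in H2. subst; auto.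
    + intros ->. left. exists k1, k2. split; auto. split; [apply IHdepth1|apply IHdepth2]; auto.
  - rewrite scons_Vars. split.
    + intros [[k' [Hj H1]]|(e & m & Hj & _)]; [|discriminate]. injection Hj; intros; subst. apply IHdepth in H1. subst; auto.
    + intros ->. left. exists k; split; auto. apply IHdepth; auto.
  - unfold Var. split.
    + intros (e & [Hv|[[k' Hv]|Hv]] & H2); try discriminate. injection Hv; intros; subst.
      inversion H2; subst. apply IHdepth in H3. subst; auto.
    + intros ->. exists [TNum k]. split. right; left. exists k; auto. constructor; auto. apply IHdepth; auto.
  - rewrite <- IHdepth. exact (sem_cong _ _ (cg_beta_P P3 P2) Vars (TNum j)).
  - split.
    + intros [[k' [Hj H1]]|(m & Hj & _)]; [|discriminate]. injection Hj; intros; subst. apply IHdepth in H1. subst; auto.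
    + intros ->. left. exists k; split; auto. apply IHdepth; auto.
  - unfold Var. split.
    + intros [H|[[k H]|H]]; try discriminate. injection H; auto.
    + intros ->; right; right; auto.
  - rewrite <- IHdepth. exact (sem_cong _ _ (cg_beta_N P3 n) Vars (TNum j)).
Qed.

Lemma sem_par_num P Q r j : sem (Par P Q) r (TNum j) <-> exists a b, j = a + b /\ sem P r (TNum a) /\ sem Q r (TNum b).
Proof.
  simpl. split.
  - intros [(a & b & Hj & H1 & H2)|[Hn _]]; [|contradiction]. injection Hj; intros; subst. eauto.
  - intros (a & b & -> & H1 & H2). left; eauto.
Qed.

Lemma sem_par_cong P Q P2 Q2 r : (forall t, sem P r t <-> sem P2 r t) -> (forall t, sem Q r t <-> sem Q2 r t) ->
  forall t, sem (Par P Q) r t <-> sem (Par P2 Q2) r t.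
Proof. intros H1 H2 t. simpl. setoid_rewrite H1. setoid_rewrite H2. reflexivity. Qed.

Definition lts_prop (X : term) (l : label) (X' : term) : Prop :=
  match l with
  | LOut m B => forall r t, sem X r t <-> sem (Par (Out m B) X') r t
  | LIn m => forall r j, sem X r (TNum j) <-> exists j', j = S j' /\ sem X' (scons Var r) (TNum j')
  | LTau => True
  end.

Lemma lts_sem X l X' : lts X l X' -> lts_prop X l X'.
Proof.
  induction 1; cbv beta iota delta [lts_prop] in *; auto.
  - intros r j. simpl. split; intros [k [Hk H]]; exists k; split; auto; congruence.
  - intros r t. apply sem_cong. apply cg_sym, cg_par_nil.
  - intros r t. rewrite <- (sem_cong _ _ (cg_par_assoc (Out m A) P' Q)).
    apply sem_par_cong; intros; [apply IHlts|reflexivity].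
  - intros r j. rewrite sem_par_num. split.
    + intros (a & b & -> & H1 & H2). apply IHlts in H1. destruct H1 as [a' [-> H1]].
      exists (a' + b). split; auto. apply sem_par_num. exists a', b. split; auto. split; auto.
      rewrite sem_shiftP0_fun. auto.
    + intros (j' & -> & Hx). apply sem_par_num in Hx. destruct Hx as (a & b & -> & H1 & H2).
      rewrite sem_shiftP0_fun in H2. exists (S a), b. split; auto. split; auto. apply IHlts. eauto.
  - intros r t.
    assert (cong (Par P (Par (Out m A) Q')) (Par (Out m A) (Par P Q'))) as C.
    { eapply cg_trans. apply cg_sym, cg_par_assoc.
      eapply cg_trans. apply cg_par. apply cg_par_comm. apply cg_refl. apply cg_par_assoc. }
    rewrite <- (sem_cong _ _ C). apply sem_par_cong; intros; [reflexivity|apply IHlts].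
  - intros r j. rewrite sem_par_num. split.
    + intros (a & b & -> & H1 & H2). apply IHlts in H2. destruct H2 as [b' [-> H2]].
      exists (a + b'). split; [lia|]. apply sem_par_num. exists a, b'. split; auto. split; auto.
      rewrite sem_shiftP0_fun. auto.
    + intros (j' & -> & Hx). apply sem_par_num in Hx. destruct Hx as (a & b & -> & H1 & H2).
      rewrite sem_shiftP0_fun in H1. exists a, (S b). split; [lia|]. split; auto. apply IHlts. eauto.
  - destruct l; cbv beta iota in *; auto.
    + intros r t. rewrite (sem_cong _ _ H), IHlts.
      rewrite (sem_cong _ _ (cg_par _ _ _ _ (cg_refl _) H1)). reflexivity.
    + intros r j. rewrite (sem_cong _ _ H), IHlts.
      split; intros [j' [-> Hj]]; exists j'; split; auto; eapply sem_cong; eauto using cg_sym.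
Qed.

Ltac arith :=
  repeat (first [ match goal with
                  | |- context [?a <=? ?b] => destruct (Nat.leb_spec a b)
                  | |- context [?a =? ?b] => destruct (Nat.eqb_spec a b)
                  | |- context [?a <? ?b] => destruct (Nat.ltb_spec a b)
                  | |- context [match ?i with 0 => _ | S _ => _ end] => destruct i
                  end
                | progress simpl ]);
  try (exfalso; lia); try reflexivity; try (f_equal; lia).

Lemma shiftNname_shiftNname n : forall c c', c' <= c ->
  shiftNname (S c) (shiftNname c' n) = shiftNname c' (shiftNname c n).
Proof. destruct n; intros; unfold shiftNname; arith. Qed.

Lemma shiftP_shiftP Q : forall c c', c' <= c -> shiftP (S c) (shiftP c' Q) = shiftP c' (shiftP c Q).
Proof. induction Q; intros c c' H; [reflexivity|arith|..]; simpl; f_equal; auto; apply IHQ; lia. Qed.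

Lemma shiftP_shiftN Q : forall c d, shiftP c (shiftN d Q) = shiftN d (shiftP c Q).
Proof. induction Q; intros; simpl; f_equal; auto. destruct (c <=? i); auto. Qed.

Lemma shiftN_shiftN Q : forall d d', d' <= d -> shiftN (S d) (shiftN d' Q) = shiftN d' (shiftN d Q).
Proof.
  induction Q; intros d d' H; simpl; f_equal; auto using shiftNname_shiftNname; try (apply IHQ; lia).
Qed.

Lemma NC1 m : forall k c n, k <= c ->
  shiftNname c (substNname k n m) = substNname k (shiftNname c n) (shiftNname (S c) m).
Proof. destruct m as [a|i]; intros; unfold substNname, shiftNname; arith. Qed.

Lemma NC2 m : forall k c n, c <= k ->
  shiftNname c (substNname k n m) = substNname (S k) (shiftNname c n) (shiftNname c m).
Proof. destruct m as [a|i]; intros; unfold substNname, shiftNname; arith. Qed.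

Lemma NG1 m : forall j n, substNname j n (shiftNname j m) = m.
Proof. destruct m as [a|i]; intros; unfold substNname, shiftNname; arith. Qed.

Lemma NE x : forall j k n m, k <= j ->
  substNname j n (substNname k m x) = substNname k (substNname j n m) (substNname (S j) (shiftNname k n) x).
Proof.
  destruct x as [a|i]; intros j k n m H; [reflexivity|].
  cbn [substNname].
  destruct (Nat.eqb_spec i k).
  - subst. destruct (Nat.eqb_spec k (S j)); [lia|]. destruct (Nat.ltb_spec (S j) k); [lia|].
    cbn [substNname]. rewrite Nat.eqb_refl. reflexivity.
  - destruct (Nat.ltb_spec k i).
    + destruct (Nat.eqb_spec i (S j)).
      * subst. simpl. rewrite NG1. destruct (Nat.eqb_spec j j); [reflexivity|lia].
      * destruct (Nat.ltb_spec (S j) i); cbn [substNname]; arith.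
    + destruct (Nat.eqb_spec i (S j)); [lia|]. destruct (Nat.ltb_spec (S j) i); [lia|].
      cbn [substNname]; arith.
Qed.

Lemma shiftP_substP_ge P : forall c k Q, k <= c ->
  shiftP c (substP k Q P) = substP k (shiftP c Q) (shiftP (S c) P).
Proof.
  induction P; intros c k Q H; cbn [shiftP substP].
  - reflexivity.
  - arith.
  - f_equal. rewrite IHP by lia. f_equal. apply shiftP_shiftP; lia.
  - f_equal; auto.
  - f_equal; auto.
  - f_equal. rewrite IHP by lia. f_equal. apply shiftP_shiftP; lia.
  - f_equal; auto.
  - f_equal. rewrite IHP by lia. f_equal. apply shiftP_shiftN.
  - f_equal; auto.
Qed.

Lemma shiftP_substP_le P : forall c k Q, c <= k ->
  shiftP c (substP k Q P) = substP (S k) (shiftP c Q) (shiftP c P).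
Proof.
  induction P; intros c k Q H; cbn [shiftP substP].
  - reflexivity.
  - arith.
  - f_equal. rewrite IHP by lia. f_equal. apply shiftP_shiftP; lia.
  - f_equal; auto.
  - f_equal; auto.
  - f_equal. rewrite IHP by lia. f_equal. apply shiftP_shiftP; lia.
  - f_equal; auto.
  - f_equal. rewrite IHP by lia. f_equal. apply shiftP_shiftN.
  - f_equal; auto.
Qed.

Lemma shiftP_substN P : forall c k n, shiftP c (substN k n P) = substN k n (shiftP c P).
Proof.
  induction P; intros c k nn; cbn [shiftP substN]; try (f_equal; auto; fail).
  destruct (c <=? i); reflexivity.
Qed.

Lemma shiftN_substP P : forall c k Q, shiftN c (substP k Q P) = substP k (shiftN c Q) (shiftN c P).
Proof.
  induction P; intros c k Q; cbn [shiftN substP].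
  - reflexivity.
  - arith.
  - f_equal. rewrite IHP. f_equal. symmetry; apply shiftP_shiftN.
  - f_equal; auto.
  - f_equal; auto.
  - f_equal. rewrite IHP. f_equal. symmetry; apply shiftP_shiftN.
  - f_equal; auto.
  - f_equal. rewrite IHP. f_equal. apply shiftN_shiftN; lia.
  - f_equal; auto.
Qed.

Lemma shiftN_substN_ge P : forall c k n, k <= c ->
  shiftN c (substN k n P) = substN k (shiftNname c n) (shiftN (S c) P).
Proof.
  induction P; intros c k nn H; cbn [shiftN substN]; try (f_equal; auto using NC1; fail).
  f_equal. rewrite IHP by lia. f_equal. apply shiftNname_shiftNname; lia.
Qed.

Lemma shiftN_substN_le P : forall c k n, c <= k ->
  shiftN c (substN k n P) = substN (S k) (shiftNname c n) (shiftN c P).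
Proof.
  induction P; intros c k nn H; cbn [shiftN substN]; try (f_equal; auto using NC2; fail).
  f_equal. rewrite IHP by lia. f_equal. apply shiftNname_shiftNname; lia.
Qed.

Lemma substN_substP P : forall j n k Q, substN j n (substP k Q P) = substP k (substN j n Q) (substN j n P).
Proof.
  induction P; intros j nn k Q; cbn [substN substP].
  - reflexivity.
  - arith.
  - f_equal. rewrite IHP. f_equal. symmetry; apply shiftP_substN.
  - f_equal; auto.
  - f_equal; auto.
  - f_equal. rewrite IHP. f_equal. symmetry; apply shiftP_substN.
  - f_equal; auto.
  - f_equal. rewrite IHP. f_equal. symmetry; apply shiftN_substN_le; lia.
  - f_equal; auto.
Qed.

Lemma substN_substN P : forall j k n m, k <= j ->
  substN j n (substN k m P) = substN k (substNname j n m) (substN (S j) (shiftNname k n) P).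
Proof.
  induction P; intros j k nn mm H; cbn [substN]; try (f_equal; auto using NE; fail).
  f_equal. rewrite IHP by lia. f_equal.
  - symmetry. apply NC2. lia.
  - f_equal. apply shiftNname_shiftNname; lia.
Qed.

Lemma substP_shiftP P : forall j X, substP j X (shiftP j P) = P.
Proof. induction P; intros j X; cbn [shiftP substP]; try (f_equal; auto; fail). arith. Qed.

Lemma substN_shiftN P : forall j n, substN j n (shiftN j P) = P.
Proof. induction P; intros j nn; cbn [shiftN substN]; f_equal; auto using NG1. Qed.

Lemma substP_substP P : forall j k Q R, j <= k ->
  substP k Q (substP j R P) = substP j (substP k Q R) (substP (S k) (shiftP j Q) P).
Proof.
  induction P; intros j k Q R H; cbn [substP].
  - reflexivity.
  - arith; try (rewrite substP_shiftP; reflexivity).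
  - f_equal. rewrite IHP by lia. f_equal.
    + symmetry. apply shiftP_substP_le. lia.
    + f_equal. apply shiftP_shiftP; lia.
  - f_equal; auto.
  - f_equal; auto.
  - f_equal. rewrite IHP by lia. f_equal.
    + symmetry. apply shiftP_substP_le. lia.
    + f_equal. apply shiftP_shiftP; lia.
  - f_equal; auto.
  - f_equal. rewrite IHP by lia. f_equal.
    + symmetry. apply shiftN_substP.
    + f_equal. apply shiftP_shiftN.
  - f_equal; auto.
Qed.

Lemma substP_substN P : forall k Q j n, substP k Q (substN j n P) = substN j n (substP k (shiftN j Q) P).
Proof.
  induction P; intros k Q j nn; cbn [substP substN].
  - reflexivity.
  - arith; try (rewrite substN_shiftN; reflexivity).
  - f_equal. rewrite IHP. f_equal. f_equal. symmetry; apply shiftP_shiftN.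
  - f_equal; auto.
  - f_equal; auto.
  - f_equal. rewrite IHP. f_equal. f_equal. symmetry; apply shiftP_shiftN.
  - f_equal; auto.
  - f_equal. rewrite IHP. f_equal. f_equal. apply shiftN_shiftN; lia.
  - f_equal; auto.
Qed.

Lemma depth_shiftP P k : depth P k -> forall c, depth (shiftP c P) k.
Proof.
  induction 1; intros c; cbn [shiftP]; try (constructor; auto; fail).
  - destruct (c <=? i); constructor.
  - destruct (c <=? i); constructor; auto.
  - constructor. rewrite <- shiftP_substP_ge by lia. auto.
  - destruct (c <=? i); constructor.
  - constructor. rewrite <- shiftP_substN. auto.
Qed.

Lemma depth_shiftN P k : depth P k -> forall c, depth (shiftN c P) k.
Proof.
  induction 1; intros c; cbn [shiftN]; try (constructor; auto; fail).
  - constructor. rewrite <- shiftN_substP. auto.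
  - constructor. rewrite <- shiftN_substN_ge by lia. auto.
Qed.

Lemma depth_substN P k : depth P k -> forall j n, depth (substN j n P) k.
Proof.
  induction 1; intros j nn; cbn [substN]; try (constructor; auto; fail).
  - constructor. rewrite <- substN_substP. auto.
  - constructor. rewrite <- substN_substN by lia. auto.
Qed.

Lemma typed_shiftP srt GN GP P T : typed srt GN GP P T -> forall c GP',
  (forall i, nth_error GP' (if c <=? i then S i else i) = nth_error GP i) ->
  typed srt GN GP' (shiftP c P) T.
Proof.
  induction 1; intros c GP' Hc; cbn [shiftP]; try (econstructor; eauto; fail).
  - specialize (Hc i). destruct (c <=? i); constructor; congruence.
  - econstructor; eauto. apply IHtyped. intros [|i]; simpl; auto. specialize (Hc i). destruct (c <=? i); auto.
  - econstructor; eauto. apply IHtyped. intros [|i]; simpl; auto. specialize (Hc i). destruct (c <=? i); auto.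
Qed.

Lemma name_ty_shift srt GN GN' c m :
  (forall i, nth_error GN' (if c <=? i then S i else i) = nth_error GN i) ->
  name_ty srt GN' (shiftNname c m) = name_ty srt GN m.
Proof. intros H; destruct m; simpl; auto. rewrite <- H. destruct (c <=? i); auto. Qed.

Lemma typed_shiftN srt GN GP P T : typed srt GN GP P T -> forall c GN',
  (forall i, nth_error GN' (if c <=? i then S i else i) = nth_error GN i) ->
  typed srt GN' GP (shiftN c P) T.
Proof.
  induction 1; intros c GN' Hc; cbn [shiftN];
    assert (Hn : forall m, name_ty srt GN' (shiftNname c m) = name_ty srt GN m) by (intros; apply name_ty_shift; auto);
    try (econstructor; try rewrite Hn; eauto; fail).
  econstructor; eauto. apply IHtyped. intros [|i]; simpl; auto. specialize (Hc i). destruct (c <=? i); auto.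
Qed.

Lemma typed_substP srt GN GP P T : typed srt GN GP P T -> forall k U GP' Q,
  nth_error GP k = Some U ->
  (forall i, i < k -> nth_error GP' i = nth_error GP i) ->
  (forall i, k < i -> nth_error GP' (pred i) = nth_error GP i) ->
  typed srt GN GP' Q U -> typed srt GN GP' (substP k Q P) T.
Proof.
  induction 1; intros k U GP' QQ Hk H1 H2 HQ; cbn [substP]; try (econstructor; eauto; fail).
  - destruct (Nat.eqb_spec i k).
    + subst. rewrite Hk in H. injection H; intros; subst; auto.
    + destruct (Nat.ltb_spec k i); constructor.
      * rewrite H2; auto.
      * rewrite H1; auto. lia.
  - econstructor; eauto. apply (IHtyped (S k) U (T :: GP') (shiftP 0 QQ)).
    + simpl; eauto.
    + intros [|i] Hi; simpl; auto. apply H1; lia.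
    + intros [|[|i]] Hi; simpl; try lia. apply (H2 (S i)); lia.
    + eapply typed_shiftP; eauto; intros i; simpl; auto.
  - econstructor; eauto. apply (IHtyped (S k) U (T :: GP') (shiftP 0 QQ)).
    + simpl; eauto.
    + intros [|i] Hi; simpl; auto. apply H1; lia.
    + intros [|[|i]] Hi; simpl; try lia. apply (H2 (S i)); lia.
    + eapply typed_shiftP; eauto; intros i; simpl; auto.
  - econstructor; eauto. apply (IHtyped k U GP' (shiftN 0 QQ)); auto.
    eapply typed_shiftN; eauto; intros i; simpl; auto.
Qed.

Lemma name_ty_subst srt GN GN' k U n m T :
  nth_error GN k = Some U ->
  (forall i, i < k -> nth_error GN' i = nth_error GN i) ->
  (forall i, k < i -> nth_error GN' (pred i) = nth_error GN i) ->
  name_ty srt GN' n = Some U -> name_ty srt GN m = Some T -> name_ty srt GN' (substNname k n m) = Some T.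
Proof.
  intros Hk H1 H2 Hn Hm. destruct m as [a|i]; simpl in *; auto.
  destruct (Nat.eqb_spec i k).
  - subst. rewrite Hk in Hm. congruence.
  - destruct (Nat.ltb_spec k i); simpl.
    + rewrite H2; auto.
    + rewrite H1; auto. lia.
Qed.

Lemma typed_substN srt GN GP P T : typed srt GN GP P T -> forall k U GN' n,
  nth_error GN k = Some U ->
  (forall i, i < k -> nth_error GN' i = nth_error GN i) ->
  (forall i, k < i -> nth_error GN' (pred i) = nth_error GN i) ->
  name_ty srt GN' n = Some U -> typed srt GN' GP (substN k n P) T.
Proof.
  induction 1; intros k U GN' nn Hk H1 H2 Hn; cbn [substN];
    try (econstructor; eauto using name_ty_subst; fail).
  econstructor; eauto. apply (IHtyped (S k) U (T :: GN') (shiftNname 0 nn)).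
  + simpl; eauto.
  + intros [|i] Hi; simpl; auto. apply H1; lia.
  + intros [|[|i]] Hi; simpl; try lia. apply (H2 (S i)); lia.
  + rewrite (name_ty_shift srt GN' (T :: GN') 0 nn); auto.
Qed.

Lemma typed_TAbs srt GN GP X T : typed srt GN GP X (TAbs T) ->
  (exists i, X = PVar i) \/ (exists X0, X = PAbs X0 /\ typed srt GN (T :: GP) X0 TPr).
Proof. intros H; inversion H; subst; eauto. Qed.

Lemma typed_TNAbs srt GN GP X T : typed srt GN GP X (TNAbs T) ->
  (exists i, X = PVar i) \/ (exists X0, X = NAbs X0 /\ typed srt (T :: GN) GP X0 TPr).
Proof. intros H; inversion H; subst; eauto. Qed.

Lemma depth_PAbs_inv X k : depth (PAbs X) k -> exists k0, k = S k0 /\ depth X k0.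
Proof. intros H; inversion H; subst; eauto. Qed.

Lemma depth_NAbs_inv X k : depth (NAbs X) k -> exists k0, k = S k0 /\ depth X k0.
Proof. intros H; inversion H; subst; eauto. Qed.

Lemma inv_papp srt GN GP P Q T : typed srt GN GP (PApp P Q) T ->
  exists T1, typed srt GN GP P (TAbs T1) /\ typed srt GN GP Q T1.
Proof. intros H; inversion H; subst; eauto. Qed.

Lemma inv_napp srt GN GP P n T : typed srt GN GP (NApp P n) T ->
  exists T1, typed srt GN GP P (TNAbs T1) /\ name_ty srt GN n = Some T1.
Proof. intros H; inversion H; subst; eauto. Qed.

Lemma inv_var srt GN GP i T : typed srt GN GP (PVar i) T -> nth_error GP i = Some T.
Proof. intros H; inversion H; subst; eauto. Qed.

Definition D (P : term) := exists k, depth P k.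

Definition SUBst (T : ty) := forall P kk, depth P kk -> forall srt GN GP Tp k GP' Q,
  typed srt GN GP P Tp -> nth_error GP k = Some T ->
  (forall i, i < k -> nth_error GP' i = nth_error GP i) ->
  (forall i, k < i -> nth_error GP' (pred i) = nth_error GP i) ->
  typed srt GN GP' Q T -> D Q -> D (substP k Q P).

Lemma ctx_S (T : ty) (GP GP' : list ty) (k : nat) :
  (forall i, i < k -> nth_error GP' i = nth_error GP i) ->
  (forall i, k < i -> nth_error GP' (pred i) = nth_error GP i) ->
  (forall i, i < S k -> nth_error (T :: GP') i = nth_error (T :: GP) i) /\
  (forall i, S k < i -> nth_error (T :: GP') (pred i) = nth_error (T :: GP) i).
Proof.
  intros H1 H2. split.
  - intros [|i] Hi; simpl; auto. apply H1; lia.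
  - intros [|[|i]] Hi; simpl; try lia. apply (H2 (S i)); lia.
Qed.

Lemma SUB_step T : (forall T', T = TAbs T' -> SUBst T') -> SUBst T.
Proof.
  intros IHT P kk HD. induction HD as [|i|m P d HD IHHD|m P d HD IHHD|P1 P2 d1 d2 HD1 IHHD1 HD2 IHHD2|P d HD IHHD|i P d HD IHHD|P3 P2 d HD IHHD|P d HD IHHD|i n|P3 n d HD IHHD]; intros srt GN GP Tp k GP' Q HT Hk H1 H2 HQ [jq DQ]; cbn [substP].
  - exists 0; constructor.
  - destruct (i =? k). { exists jq; auto. } destruct (k <? i); eexists; constructor.
  - inversion HT; subst. destruct (ctx_S T0 GP GP' k H1 H2) as [H1' H2'].
    destruct (IHHD srt GN (T0 :: GP) TPr (S k) (T0 :: GP') (shiftP 0 Q)) as [j Hj]; auto.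
    + eapply typed_shiftP; eauto; intros; simpl; auto.
    + exists jq. apply depth_shiftP; auto.
    + exists (S j); constructor; auto.
  - inversion HT; subst.
    destruct (IHHD srt GN GP T0 k GP' Q) as [j Hj]; eauto. { exists jq; auto. }
    exists (S j); constructor; auto.
  - inversion HT; subst.
    destruct (IHHD1 srt GN GP TPr k GP' Q) as [j1 Hj1]; eauto. { exists jq; auto. }
    destruct (IHHD2 srt GN GP TPr k GP' Q) as [j2 Hj2]; eauto. { exists jq; auto. }
    exists (j1 + j2); constructor; auto.
  - inversion HT; subst. destruct (ctx_S T0 GP GP' k H1 H2) as [H1' H2'].
    destruct (IHHD srt GN (T0 :: GP) TPr (S k) (T0 :: GP') (shiftP 0 Q)) as [j Hj]; auto.
    + eapply typed_shiftP; eauto; intros; simpl; auto.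
    + exists jq. apply depth_shiftP; auto.
    + exists (S j); constructor; auto.
  - destruct (inv_papp _ _ _ _ _ _ HT) as [T0 [HV HP]]. apply inv_var in HV. rename HV into Hi.
    destruct (IHHD srt GN GP T0 k GP' Q) as [j Hj]; eauto. { exists jq; auto. }
    destruct (Nat.eqb_spec i k).
    + subst. rewrite Hk in Hi. injection Hi; intros; subst.
      assert (HP' : typed srt GN GP' (substP k Q P) T0) by (eapply typed_substP; eauto).
      set (P' := substP k Q P) in *. clearbody P'.
      destruct (typed_TAbs _ _ _ _ _ HQ) as [[j0 ->]|[Q0 [-> HQ0]]].
      * exists (S j); constructor; auto.
      * destruct (depth_PAbs_inv _ _ DQ) as [jq0 [_ DQ0]].
        destruct (IHT T0 eq_refl Q0 jq0 DQ0 srt GN (T0 :: GP') TPr 0 GP' P') as [j1 Hj1]; auto.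
        -- intros; lia.
        -- intros [|i] Hi'; simpl; [lia|auto].
        -- exists j; auto.
        -- exists j1; constructor; auto.
    + destruct (k <? i); eexists; constructor; eauto.
  - destruct (inv_papp _ _ _ _ _ _ HT) as [T0 [HA HP2]].
    destruct (typed_TAbs _ _ _ _ _ HA) as [[j0 Hj0]|[P0 [Heq HP3]]]; [discriminate|].
    injection Heq; intros; subst.
    assert (typed srt GN GP (substP 0 P2 P0) TPr) as HS.
    { eapply typed_substP; eauto; simpl; auto. intros; lia. intros [|i] Hi; simpl; auto; lia. }
    destruct (IHHD srt GN GP TPr k GP' Q) as [j Hj]; eauto. { exists jq; auto. }
    rewrite substP_substP in Hj by lia. exists j; constructor; auto.
  - inversion HT; subst.
    destruct (IHHD srt (T0 :: GN) GP TPr k GP' (shiftN 0 Q)) as [j Hj]; auto.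
    + eapply typed_shiftN; eauto; intros; simpl; auto.
    + exists jq. apply depth_shiftN; auto.
    + exists (S j); constructor; auto.
  - destruct (inv_napp _ _ _ _ _ _ HT) as [T0 [HV Hn]]. apply inv_var in HV. rename HV into Hi.
    destruct (Nat.eqb_spec i k).
    + subst. rewrite Hk in Hi. injection Hi; intros; subst.
      destruct (typed_TNAbs _ _ _ _ _ HQ) as [[j0 ->]|[Q0 [-> HQ0]]].
      * exists 1; constructor.
      * destruct (depth_NAbs_inv _ _ DQ) as [jq0 [_ DQ0]].
        exists jq0. constructor. apply depth_substN; auto.
    + destruct (k <? i); eexists; constructor.
  - destruct (inv_napp _ _ _ _ _ _ HT) as [T0 [HA Hn]].
    destruct (typed_TNAbs _ _ _ _ _ HA) as [[j0 Hj0]|[P0 [Heq HP3]]]; [discriminate|].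
    injection Heq; intros; subst.
    assert (typed srt GN GP (substN 0 n P0) TPr) as HS.
    { eapply typed_substN; eauto; simpl; auto. intros; lia. intros [|i] Hi; simpl; auto; lia. }
    destruct (IHHD srt GN GP TPr k GP' Q) as [j Hj]; eauto. { exists jq; auto. }
    rewrite substP_substN in Hj. exists j; constructor; auto.
Qed.

Lemma SUB_all T : SUBst T.
Proof. induction T; apply SUB_step; intros T' E; inversion E; subst; auto. Qed.

Lemma norm srt GN GP P T : typed srt GN GP P T -> D P.
Proof.
  induction 1.
  - exists 0; constructor.
  - exists 1; constructor.
  - destruct IHtyped as [k Hk]. exists (S k); constructor; auto.
  - destruct IHtyped as [k Hk]. exists (S k); constructor; auto.
  - destruct IHtyped1 as [k1 Hk1]. destruct IHtyped2 as [k2 Hk2]. exists (k1 + k2); constructor; auto.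
  - destruct IHtyped as [k Hk]. exists (S k); constructor; auto.
  - destruct (typed_TAbs _ _ _ _ _ H) as [[i ->]|[P0 [-> HP0]]].
    + destruct IHtyped2 as [k Hk]. exists (S k); constructor; auto.
    + destruct IHtyped1 as [k Hk]. destruct (depth_PAbs_inv _ _ Hk) as [k0 [_ Hk0]].
      destruct (SUB_all T P0 k0 Hk0 srt GN (T :: GP) TPr 0 GP Q) as [j Hj]; auto.
      * intros; lia.
      * intros [|i] Hi; simpl; [lia|auto].
      * exists j; constructor; auto.
  - destruct IHtyped as [k Hk]. exists (S k); constructor; auto.
  - destruct (typed_TNAbs _ _ _ _ _ H) as [[i ->]|[P0 [-> HP0]]].
    + exists 1; constructor.
    + destruct IHtyped as [k Hk]. destruct (depth_NAbs_inv _ _ Hk) as [k0 [_ Hk0]].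
      exists k0; constructor. apply depth_substN; auto.
Qed.

Definition Obs srt GN GP P k :=
 (exists m A P' U a p, lts P (LOut m A) P' /\ typed srt GN GP A U /\ depth A a /\ typed srt GN GP P' TPr /\ depth P' p /\ k = S (a + p))
 \/ (exists m P' U p, lts P (LIn m) P' /\ typed srt GN (U :: GP) P' TPr /\ depth P' p /\ k = S p)
 \/ (exists i P' p, cong P (Par (PVar i) P') /\ typed srt GN GP P' TPr /\ depth P' p /\ k = S p)
 \/ (exists i A P' U a p, cong P (Par (PApp (PVar i) A) P') /\ typed srt GN GP A U /\ depth A a /\ typed srt GN GP P' TPr /\ depth P' p /\ k = S (a + p))
 \/ (exists i n P' p, cong P (Par (NApp (PVar i) n) P') /\ typed srt GN GP P' TPr /\ depth P' p /\ k = S p).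

Lemma Obs_cong srt GN GP P P2 k : cong P P2 -> Obs srt GN GP P2 k -> Obs srt GN GP P k.
Proof.
  intros C [H|[H|[H|[H|H]]]].
  - destruct H as (m & A & P' & U & a & p & H1 & H2). left. exists m, A, P', U, a, p. split; auto.
    eapply lt_struct; eauto. apply cg_refl.
  - destruct H as (m & P' & U & p & H1 & H2). right; left. exists m, P', U, p. split; auto.
    eapply lt_struct; eauto. apply cg_refl.
  - destruct H as (i & P' & p & H1 & H2). right; right; left. exists i, P', p. split; auto. eapply cg_trans; eauto.
  - destruct H as (i & A & P' & U & a & p & H1 & H2). right; right; right; left. exists i, A, P', U, a, p. split; auto. eapply cg_trans; eauto.
  - destruct H as (i & n & P' & p & H1 & H2). right; right; right; right. exists i, n, P', p. split; auto. eapply cg_trans; eauto.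
Qed.

Lemma cong_pull X P1 P2 P' : cong P1 (Par X P') -> cong (Par P1 P2) (Par X (Par P' P2)).
Proof.
  intros C. eapply cg_trans. apply cg_par; [exact C|apply cg_refl]. apply cg_par_assoc.
Qed.

Lemma cong_pull_r X P1 P2 P' : cong P2 (Par X P') -> cong (Par P1 P2) (Par X (Par P1 P')).
Proof.
  intros C. eapply cg_trans. apply cg_par_comm. eapply cg_trans. apply cong_pull; eauto.
  apply cg_par; [apply cg_refl|apply cg_par_comm].
Qed.

Lemma Obs_par_l srt GN GP P1 P2 k1 k2 : Obs srt GN GP P1 k1 -> typed srt GN GP P2 TPr -> depth P2 k2 ->
  Obs srt GN GP (Par P1 P2) (k1 + k2).
Proof.
  intros [H|[H|[H|[H|H]]]] HT HD.
  - destruct H as (m & A & P' & U & a & p & H1 & H2 & H3 & H4 & H5 & ->). left.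
    exists m, A, (Par P' P2), U, a, (p + k2). repeat split; auto. apply lt_par_l_out; auto.
    constructor; auto. constructor; auto. all: try lia.
  - destruct H as (m & P' & U & p & H1 & H2 & H3 & ->). right; left.
    exists m, (Par P' (shiftP 0 P2)), U, (p + k2). repeat split; auto. apply lt_par_l_in; auto.
    constructor; auto. eapply typed_shiftP; eauto; intros; simpl; auto.
    constructor; auto. apply depth_shiftP; auto.
  - destruct H as (i & P' & p & H1 & H2 & H3 & ->). right; right; left.
    exists i, (Par P' P2), (p + k2). repeat split; auto. apply cong_pull; auto. constructor; auto. constructor; auto.
  - destruct H as (i & A & P' & U & a & p & H1 & H2 & H3 & H4 & H5 & ->). right; right; right; left.
    exists i, A, (Par P' P2), U, a, (p + k2). repeat split; auto. apply cong_pull; auto.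
    constructor; auto. constructor; auto. all: try lia.
  - destruct H as (i & n & P' & p & H1 & H2 & H3 & ->). right; right; right; right.
    exists i, n, (Par P' P2), (p + k2). repeat split; auto. apply cong_pull; auto. constructor; auto. constructor; auto.
Qed.

Lemma Obs_par_r srt GN GP P1 P2 k1 k2 : Obs srt GN GP P2 k2 -> typed srt GN GP P1 TPr -> depth P1 k1 ->
  Obs srt GN GP (Par P1 P2) (k1 + k2).
Proof.
  intros [H|[H|[H|[H|H]]]] HT HD.
  - destruct H as (m & A & P' & U & a & p & H1 & H2 & H3 & H4 & H5 & ->). left.
    exists m, A, (Par P1 P'), U, a, (k1 + p). repeat split; auto. apply lt_par_r_out; auto.
    constructor; auto. constructor; auto. all: try lia.
  - destruct H as (m & P' & U & p & H1 & H2 & H3 & ->). right; left.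
    exists m, (Par (shiftP 0 P1) P'), U, (k1 + p). repeat split; auto. apply lt_par_r_in; auto.
    constructor; auto. eapply typed_shiftP; eauto; intros; simpl; auto.
    constructor; auto. apply depth_shiftP; auto. all: try lia.
  - destruct H as (i & P' & p & H1 & H2 & H3 & ->). right; right; left.
    exists i, (Par P1 P'), (k1 + p). repeat split; auto. apply cong_pull_r; auto. constructor; auto. constructor; auto. all: try lia.
  - destruct H as (i & A & P' & U & a & p & H1 & H2 & H3 & H4 & H5 & ->). right; right; right; left.
    exists i, A, (Par P1 P'), U, a, (k1 + p). repeat split; auto. apply cong_pull_r; auto.
    constructor; auto. constructor; auto. all: try lia.
  - destruct H as (i & n & P' & p & H1 & H2 & H3 & ->). right; right; right; right.
    exists i, n, (Par P1 P'), (k1 + p). repeat split; auto. apply cong_pull_r; auto. constructor; auto. constructor; auto. all: try lia.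
Qed.

Lemma notabs_TPr srt GN GP X : typed srt GN GP X TPr -> ~ is_abstraction X.
Proof. intros H [[A ->]|[A ->]]; inversion H. Qed.

Ltac fin := repeat (first [apply cg_sym, cg_par_nil | apply ty_nil | apply d_nil | apply lt_out | apply lt_inp | lia]).

Lemma decomp P k : depth P k -> forall srt GN GP T, typed srt GN GP P T -> 0 < k -> ~ is_abstraction P ->
  Obs srt GN GP P k.
Proof.
  induction 1 as [|i|m P d HD IHHD|m P d HD IHHD|P1 P2 d1 d2 HD1 IHHD1 HD2 IHHD2|P d HD IHHD|i P d HD IHHD|P3 P2 d HD IHHD|P d HD IHHD|i n|P3 n d HD IHHD];
    intros srt GN GP T HT Hk Hna.
  - lia.
  - right; right; left. exists i, Nil, 0. repeat split; auto; fin.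
  - inversion HT; subst. right; left. exists m, P, T0, d. repeat split; auto; fin.
  - inversion HT; subst. left. exists m, P, Nil, T0, d, 0. repeat split; auto; fin.
  - inversion HT; subst.
    destruct d1 as [|d1].
    + apply Obs_par_r; auto.
      apply (IHHD2 srt GN GP TPr); auto. all: first [simpl in *; lia | eapply notabs_TPr; eauto].
    + apply Obs_par_l; auto. apply (IHHD1 srt GN GP TPr); auto. all: first [lia | eapply notabs_TPr; eauto].
  - exfalso; apply Hna; left; eauto.
  - destruct (inv_papp _ _ _ _ _ _ HT) as [T0 [HV HP]].
    right; right; right; left. exists i, P, Nil, T0, d, 0. repeat split; auto; fin.
  - destruct (inv_papp _ _ _ _ _ _ HT) as [T0 [HA HP2]].
    destruct (typed_TAbs _ _ _ _ _ HA) as [[j0 Hj0]|[P0 [Heq HP3]]]; [discriminate|].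
    injection Heq; intros; subst.
    assert (typed srt GN GP (substP 0 P2 P0) TPr) as HS.
    { eapply typed_substP; eauto; simpl; auto. intros; lia. intros [|i] Hi; simpl; auto; lia. }
    inversion HT; subst.
    eapply Obs_cong. apply cg_beta_P. eapply IHHD; eauto. eapply notabs_TPr; eauto.
  - exfalso; apply Hna; right; eauto.
  - right; right; right; right. exists i, n, Nil, 0. repeat split; auto; fin.
  - destruct (inv_napp _ _ _ _ _ _ HT) as [T0 [HA Hn]].
    destruct (typed_TNAbs _ _ _ _ _ HA) as [[j0 Hj0]|[P0 [Heq HP3]]]; [discriminate|].
    injection Heq; intros; subst.
    assert (typed srt GN GP (substN 0 n P0) TPr) as HS.
    { eapply typed_substN; eauto; simpl; auto. intros; lia. intros [|i] Hi; simpl; auto; lia. }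
    eapply Obs_cong. apply cg_beta_N. eapply IHHD; eauto. eapply notabs_TPr; eauto.
Qed.

Lemma Var_num x : Var (TNum x) -> x = 1.
Proof. intros [H|[[k H]|H]]; try discriminate. injection H; auto. Qed.

Lemma Var_fun e x : Var (TFun e (TNum x)) -> exists b, e = [TNum b] /\ x = S b.
Proof. intros [H|[[k H]|H]]; try discriminate. injection H; intros; subst; eauto. Qed.

Lemma Var_nm x : Var (TNm (TNum x)) -> x = 1.
Proof. intros [H|[[k H]|H]]; try discriminate. injection H; auto. Qed.

Lemma claim k : forall R, is_hoio_bisim R -> forall P Q srt GN GP T, R P Q -> typed srt GN GP P T ->
  depth P k -> forall q, N Q q -> k <= q.
Proof.
  induction k as [k IH] using (well_founded_induction Wf_nat.lt_wf).
  intros R HR P Q srt GN GP T HRPQ HT HD q HN.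
  pose proof HR as [Hsym Hb].
  destruct (Hb P Q HRPQ) as (C1 & C2 & C3 & C4 & C5 & C6 & C7 & C8).
  destruct k as [|k']; [lia|].
  assert (Hcase : (exists A, P = PAbs A) \/ (exists A, P = NAbs A) \/ ~ is_abstraction P).
  { destruct P; eauto; right; right; intros [[? H]|[? H]]; discriminate. }
  destruct Hcase as [[A ->]|[[A ->]|Hna]].
  - destruct (C2 A eq_refl) as [B [-> HAB]].
    destruct (depth_PAbs_inv _ _ HD) as [k0 [Hk0 HA]]. injection Hk0; intros; subst.
    inversion HT; subst.
    unfold N in HN; simpl in HN. destruct HN as [[b [Hb' HB]]|(e & m & Hm & _)]; [|discriminate].
    injection Hb'; intros; subst. rewrite scons_Vars in HB.
    assert (k0 <= b) by (eapply (IH k0); eauto). lia.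
  - destruct (C3 A eq_refl) as [B [-> HAB]].
    destruct (depth_NAbs_inv _ _ HD) as [k0 [Hk0 HA]]. injection Hk0; intros; subst.
    inversion HT; subst.
    unfold N in HN; simpl in HN. destruct HN as [[b [Hb' HB]]|(m & Hm & _)]; [|discriminate].
    injection Hb'; intros; subst.
    assert (k0 <= b) by (eapply (IH k0); eauto). lia.
  - destruct (decomp _ _ HD _ _ _ _ HT ltac:(lia) Hna) as [H|[H|[H|[H|H]]]].
    + destruct H as (m & A & P' & U & a & p & H1 & H2 & H3 & H4 & H5 & Hk).
      destruct (C4 m A P' H1) as (B & Q' & HQ1 & HAB & HPQ').
      pose proof (lts_sem _ _ _ HQ1) as HS. cbv beta iota delta [lts_prop] in HS. unfold N in HN.
      apply HS in HN. apply sem_par_num in HN. destruct HN as (x & y & -> & Hx & Hy).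
      destruct Hx as [b [Hx HB]]. injection Hx; intros; subst.
      assert (a <= b) by (eapply (IH a); [lia| exact HR | exact HAB | exact H2 | exact H3 | exact HB]).
      assert (p <= y) by (eapply (IH p); [lia| exact HR | exact HPQ' | exact H4 | exact H5 | exact Hy]). lia.
    + destruct H as (m & P' & U & p & H1 & H2 & H3 & Hk).
      destruct (C5 m P' H1) as (Q' & HQ1 & HPQ').
      pose proof (lts_sem _ _ _ HQ1) as HS. cbv beta iota delta [lts_prop] in HS. unfold N in HN.
      apply HS in HN. destruct HN as (j & -> & Hj). rewrite scons_Vars in Hj.
      assert (p <= j) by (eapply (IH p); [lia| exact HR | exact HPQ' | exact H2 | exact H3 | exact Hj]). lia.
    + destruct H as (i & P' & p & H1 & H2 & H3 & Hk).
      destruct (C6 i P' H1) as (Q' & HQ1 & HPQ').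
      unfold N in HN. apply (sem_cong _ _ HQ1) in HN. apply sem_par_num in HN.
      destruct HN as (x & y & -> & Hx & Hy). apply Var_num in Hx. subst.
      assert (p <= y) by (eapply (IH p); [lia| exact HR | exact HPQ' | exact H2 | exact H3 | exact Hy]). lia.
    + destruct H as (i & A & P' & U & a & p & H1 & H2 & H3 & H4 & H5 & Hk).
      destruct (C7 i A P' H1) as (B & Q' & HQ1 & HAB & HPQ').
      unfold N in HN. apply (sem_cong _ _ HQ1) in HN. apply sem_par_num in HN.
      destruct HN as (x & y & -> & Hx & Hy).
      destruct Hx as (e & He & Hf). apply Var_fun in He. destruct He as (b & -> & ->).
      inversion Hf; subst.
      assert (a <= b) by (eapply (IH a); [lia| exact HR | exact HAB | exact H2 | exact H3 | exact (Forall_inv Hf)]).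
      assert (p <= y) by (eapply (IH p); [lia| exact HR | exact HPQ' | exact H4 | exact H5 | exact Hy]). lia.
    + destruct H as (i & n & P' & p & H1 & H2 & H3 & Hk).
      destruct (C8 i n P' H1) as (Q' & HQ1 & HPQ').
      unfold N in HN. apply (sem_cong _ _ HQ1) in HN. apply sem_par_num in HN.
      destruct HN as (x & y & -> & Hx & Hy). apply Var_nm in Hx. subst.
      assert (p <= y) by (eapply (IH p); [lia| exact HR | exact HPQ' | exact H2 | exact H3 | exact Hy]). lia.
Qed.

Lemma aux P Q : well_typed P -> well_typed Q -> (cong P Q \/ hoio_bisimilar P Q) ->
  forall k, depth P k -> depth Q k.
Proof.
  intros [srt [GN [GP [T HTP]]]] [srt' [GN' [GP' [T' HTQ]]]] HC k HD.
  destruct (norm _ _ _ _ _ HTQ) as [k' Hk'].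
  assert (k = k') as ->; [|auto].
  destruct HC as [C|[R [HR HRPQ]]].
  - symmetry. apply (depth_N _ _ HD). unfold N. apply (sem_cong _ _ C). apply (depth_N _ _ Hk'). auto.
  - assert (k <= k').
    { apply (claim k R HR P Q srt GN GP T); auto. apply (depth_N _ _ Hk'); auto. }
    assert (k' <= k).
    { apply (claim k' R HR Q P srt' GN' GP' T'); auto. apply (proj1 HR); auto. apply (depth_N _ _ HD); auto. }
    lia.
Qed.

Theorem mainTheorem3 (P Q : term) :
  well_typed P -> well_typed Q ->
  (cong P Q \/ hoio_bisimilar P Q) ->
  forall k : nat, depth P k <-> depth Q k.
Proof.
  intros HP HQ HC k. split.
  - apply aux; auto.
  - apply aux; auto. destruct HC as [C|[R [HR HRPQ]]].
    + left; apply cg_sym; auto.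
    + right; exists R; split; auto. apply (proj1 HR); auto.
Qed.
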